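(* Let $G$ be a finite bipartite graph with maximum degree $\Delta(G)$. Suppose that some set $E_0$ of edges of the Cartesian product $G \square K_2$ is precolored using colors from a set of at most $\Delta(G)+1$ colors, such that the distance between any two edges of $E_0$ is at least three. Then this precoloring is extendable, i.e. there is a proper edge coloring of $G \square K_2$ with $\chi'(G \square K_2)$ colors in which every edge of $E_0$ receives its prescribed color.
   Context: The Cartesian product $G \square H$ has vertex set $V(G)\times V(H)$, with $(u_1,u_2)$ adjacent to $(v_1,v_2)$ iff either $u_1=v_1$ and $u_2v_2 \in E(H)$, or $u_2=v_2$ and $u_1v_1\in E(G)$. The distance between vertices is the length of a shortest path between them, and the distance between edges $xy$ and $zw$ is $\min\{d(x,z),d(x,w),d(y,z),d(y,w)\}$. $\chi'$ denotes the chromatic index. *)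

(* Defs.v *)
From mathcomp Require Import all_boot.
Set Implicit Arguments. Unset Strict Implicit. Unset Printing Implicit Defensive.

Definition simple_graph (V : finType) (e : rel V) : Prop :=
  symmetric e /\ irreflexive e.

Definition bipartite (V : finType) (e : rel V) : Prop :=
  exists p : V -> bool, forall x y, e x y -> p x != p y.

Definition edges (V : finType) (e : rel V) : {set {set V}} :=
  [set [set x; y] | x in V, y in V & e x y].

Definition degree (V : finType) (e : rel V) (x : V) : nat := #|[set y | e x y]|.

Definition max_degree (V : finType) (e : rel V) : nat := \max_(x : V) degree e x.

Definition prodK2 (T : finType) (g : rel T) : rel (T * bool) :=
  fun u v => ((u.1 == v.1) && (u.2 != v.2)) || ((u.2 == v.2) && g u.1 v.1).

Fixpoint within (V : finType) (e : rel V) (k : nat) (x y : V) : bool :=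
  match k with
  | 0 => x == y
  | k'.+1 => within e k' x y || [exists z, e x z && within e k' z y]
  end.

Definition edge_dist_ge (V : finType) (e : rel V) (k : nat) (a b : {set V}) : Prop :=
  forall x y, x \in a -> y \in b -> ~~ within e k.-1 x y.

Definition proper_edge_coloring (V : finType) (e : rel V) (k : nat)
  (f : {set V} -> nat) : Prop :=
  (forall a, a \in edges e -> f a < k) /\
  (forall a b, a \in edges e -> b \in edges e -> a != b ->
     (exists v, (v \in a) && (v \in b)) -> f a != f b).

Definition edge_colorable (V : finType) (e : rel V) (k : nat) : Prop :=
  exists f, proper_edge_coloring e k f.

Definition chromatic_index (V : finType) (e : rel V) (k : nat) : Prop :=
  edge_colorable e k /\ forall j, edge_colorable e j -> k <= j.

(* Main.v *)
Require Import Defs.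
From mathcomp Require Import all_boot.
From Stdlib Require Import ClassicalEpsilon.
Set Implicit Arguments. Unset Strict Implicit. Unset Printing Implicit Defensive.

Definition pb (P : Prop) : bool := if excluded_middle_informative P then true else false.
Lemma pbP P : reflect P (pb P).
Proof. rewrite /pb; case: excluded_middle_informative => h; constructor; exact h. Qed.

Section Bip.
Variables (A B : finType) (r : A -> B -> bool).
Definition Ed : {set A * B} := [set e | r e.1 e.2].
Definition adjE (e f : A * B) := (e != f) && ((e.1 == f.1) || (e.2 == f.2)).
Definition proper_on (U : {set A*B}) (k : A * B -> nat) :=
  forall e f, e \in U -> f \in U -> adjE e f -> k e != k f.

Lemma missing_color (D : nat) (S : {set A*B}) (k : A*B -> nat) :
  #|S| < D -> exists2 c, c < D & forall e, e \in S -> k e != c.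
Proof.
case: D => // D ltSD.
pose Img := [set (inord (k e) : 'I_D.+1) | e in S].
have : ~~ ([set: 'I_D.+1] \subset Img).
  apply/negP => /subset_leq_card; rewrite cardsT card_ord.
  move=> H; have := leq_trans H (leq_imset_card _ _).
  by rewrite leqNgt ltSD.
case/subsetPn => i _ Hi; exists i => // e eS; apply/eqP => ke.
move/negP: Hi; apply; apply/imsetP; exists e => //.
by apply: val_inj; rewrite /= inordK ke.
Qed.

Section Kempe.
Variables (U : {set A*B}) (k : A*B -> nat) (al be : nat) (t0 : B).
Inductive rA : A -> Prop := rA_step a b of rB b & (a,b) \in U & k (a,b) = al : rA a
with rB : B -> Prop := rB0 b of b = t0 : rB b | rB_step a b of rA a & (a,b) \in U & k (a,b) = be : rB b.

Definition sw (x : nat) := if x == al then be else if x == be then al else x.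
Definition k2 (e : A * B) := if pb (rA e.1) && (e \in U) then sw (k e) else k e.

Hypothesis kpr : proper_on U k.
Hypothesis t0be : forall e, e \in U -> e.2 = t0 -> k e != be.
Hypothesis albe : al != be.

Lemma rA_al a : rA a -> exists2 b, (a,b) \in U & k (a,b) = al.
Proof. by move=> H; inversion H; exists b. Qed.

Lemma uniq1 a b b' : (a,b) \in U -> (a,b') \in U -> k (a,b) = k (a,b') -> b = b'.
Proof.
move=> H1 H2 H3; apply/eqP; apply: contraT => nb.
have : adjE (a,b) (a,b') by rewrite /adjE eqxx orTb andbT; apply: contra nb => /eqP [->].
by move/(kpr H1 H2); rewrite H3 eqxx.
Qed.

Lemma uniq2 a a' b : (a,b) \in U -> (a',b) \in U -> k (a,b) = k (a',b) -> a = a'.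
Proof.
move=> H1 H2 H3; apply/eqP; apply: contraT => nb.
have : adjE (a,b) (a',b) by rewrite /adjE eqxx orbT andbT; apply: contra nb => /eqP [->].
by move/(kpr H1 H2); rewrite H3 eqxx.
Qed.

Lemma link e : e \in U -> (k e = al \/ k e = be) -> (rA e.1 <-> rB e.2).
Proof.
case: e => a b /= eU kab; split.
- move=> H; inversion H as [a0 b' Hb' Hab' kab']; subst a0.
  case: kab => kab.
    by have <- // := uniq1 Hab' eU; rewrite kab'.
  by apply: rB_step (rA_step Hb' Hab' kab') eU kab.
- move=> H; inversion H as [b0 bt|a' b0 Ha' Ha'b ka'b]; subst b0.
    case: kab => kab; last by move: (t0be eU bt); rewrite kab eqxx.
    by apply: rA_step (rB0 bt) eU kab.
  case: kab => kab; first by apply: rA_step (rB_step Ha' Ha'b ka'b) eU kab.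
  by have -> // := uniq2 eU Ha'b; rewrite kab.
Qed.

Lemma sw_inj : injective sw.
Proof.
have bea : (be == al) = false by rewrite eq_sym (negbTE albe).
have swK : involutive sw.
  move=> x; rewrite /sw; case: (eqVneq x al) => [->|xa]; first by rewrite ?eqxx ?bea ?eqxx.
  case: (eqVneq x be) => [->|xb]; first by rewrite ?eqxx ?bea.
  by rewrite ?(negbTE xa) ?(negbTE xb).
exact: inv_inj swK.
Qed.

Lemma sw_id x : x != al -> x != be -> sw x = x.
Proof. by rewrite /sw => /negbTE -> /negbTE ->. Qed.

Lemma sw_albe x : (x == al) || (x == be) -> (sw x == al) || (sw x == be).
Proof.
have bea : (be == al) = false by rewrite eq_sym (negbTE albe).
by rewrite /sw; case/orP => /eqP ->; rewrite ?eqxx ?orbT // bea eqxx.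
Qed.

Lemma k2_proper : proper_on U k2.
Proof.
move=> e f eU fU ef; have kef := kpr eU fU ef.
rewrite /k2 eU fU !andbT.
have [He|He] := boolP ((k e == al) || (k e == be)); last first.
  have -> : sw (k e) = k e by move: He; rewrite negb_or => /andP [] ; exact: sw_id.
  have [Hf|Hf] := boolP ((k f == al) || (k f == be)); last first.
    have -> : sw (k f) = k f by move: Hf; rewrite negb_or => /andP []; exact: sw_id.
    by case: pb; case: pb.
  have H2 : (sw (k f) == al) || (sw (k f) == be) by exact: sw_albe.
  by case: pb; case: pb => //; apply: contra He => /eqP ->.
have [Hf|Hf] := boolP ((k f == al) || (k f == be)); last first.
  have -> : sw (k f) = k f by move: Hf; rewrite negb_or => /andP []; exact: sw_id.
  have H2 : (sw (k e) == al) || (sw (k e) == be) by exact: sw_albe.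
  by case: pb; case: pb => //; apply: contra Hf => /eqP <-.
have st : pb (rA e.1) = pb (rA f.1).
  move: ef; rewrite /adjE => /andP [_ /orP [/eqP ->//|/eqP e2]].
  have le := link eU (ltac:(by case/orP: He => /eqP; [left|right])).
  have lf := link fU (ltac:(by case/orP: Hf => /eqP; [left|right])).
  by apply/idP/idP => /pbP H; apply/pbP; [apply/lf; rewrite -e2; apply/le | apply/le; rewrite e2; apply/lf].
rewrite st; case: pb => //; apply: contra kef => /eqP; move/sw_inj => ->//.
Qed.

Lemma k2_t0 e : e \in U -> e.2 = t0 -> k2 e != al.
Proof.
move=> eU et; rewrite /k2 eU andbT.
have [ke|ke] := eqVneq (k e) al.
  have : rA e.1 by apply/(link eU (or_introl ke)); apply: rB0.
  by move/pbP => ->; rewrite /sw ke eqxx eq_sym.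
case: pb => //; rewrite /sw (negbTE ke) (negbTE (t0be eU et)) //.
Qed.

Lemma k2_s s : (forall e, e \in U -> e.1 = s -> k e != al) ->
  forall e, e \in U -> e.1 = s -> k2 e != al.
Proof.
move=> Hs e eU es; rewrite /k2.
have -> : pb (rA e.1) = false.
  apply/pbP; rewrite es => /rA_al [b Hb kb].
  by move: (Hs _ Hb erefl); rewrite kb eqxx.
exact: Hs.
Qed.

Lemma k2_range x : k2 x = k x \/ k2 x = al \/ k2 x = be.
Proof.
rewrite /k2; case: (_ && _); last by left.
rewrite /sw; case: eqP => _; first by right; right.
by case: eqP => _; [right; left| left].
Qed.

End Kempe.

Lemma ext_proper (U' : {set A*B}) k st c : proper_on U' k ->
  (forall e, e \in U' -> e.1 = st.1 -> k e != c) ->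
  (forall e, e \in U' -> e.2 = st.2 -> k e != c) ->
  proper_on (st |: U') (fun e => if e == st then c else k e).
Proof.
move=> kpr H1 H2 e f; rewrite !in_setU1.
case: (eqVneq e st) => [->|est] /=; case: (eqVneq f st) => [->|fst] //=.
- by rewrite /adjE eqxx.
- move=> _ fU /andP [_ /orP [/eqP h|/eqP h]]; rewrite eq_sym; [exact: H1| exact: H2].
- move=> eU _ /andP [_ /orP [/eqP h|/eqP h]]; [exact: H1| exact: H2].
- by move=> eU fU; apply: kpr.
Qed.

Section Konig.
Variable D : nat.
Hypothesis degA : forall a, #|[set b | r a b]| <= D.
Hypothesis degB : forall b, #|[set a | r a b]| <= D.

Lemma konig_sub (U : {set A*B}) : U \subset Ed ->
  exists k, proper_on U k /\ forall e, e \in U -> k e < D.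
Proof.
have [n] := ubnP #|U|; elim: n U => // n IH U ltUn sUE.
case: (set_0Vmem U) => [->|[st stU]].
  by exists (fun _ => 0); split => [e f|e]; rewrite in_set0.
case: st stU => s t stU.
pose U' := U :\ (s,t).
have [k [kpr kD]] : exists k, proper_on U' k /\ forall e, e \in U' -> k e < D.
  apply: IH; first by rewrite (cardsD1 (s,t) U) stU in ltUn.
  by apply: (subset_trans _ sUE); apply: subD1set.
have UE : U = (s,t) |: U' by rewrite setD1K.
have rst : r s t by have := subsetP sUE _ stU; rewrite inE.
have rU e : e \in U' -> r e.1 e.2.
  by move=> H; have := subsetP sUE _ (subsetP (subD1set U (s,t)) _ H); rewrite inE.
have stU' : (s,t) \notin U' by rewrite !inE eqxx.
clearbody U'.
have [al alD Hal] : exists2 c, c < D & forall e, e \in [set e in U' | e.1 == s] -> k e != c.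
  apply: missing_color.
  have -> : #|[set e in U' | e.1 == s]| = #|[set e.2 | e in [set e in U' | e.1 == s]]|.
    rewrite card_in_imset //; move=> [a1 b1] [a2 b2]; rewrite !inE /=.
    by move=> /andP[_ /eqP->] /andP[_ /eqP->] /= ->.
  apply: leq_trans (degA s); apply: proper_card; apply/properP; split.
  - apply/subsetP => b /imsetP [[a1 b1]]; rewrite !inE /= => /andP [H /eqP e1] ->.
    by rewrite ?inE -e1; move: (rU _ H).
  - exists t; first by rewrite inE.
    apply/imsetP => [[[a1 b1]]]; rewrite !inE /= => /andP [H e1] e2.
    by move: stU'; rewrite -(eqP e1) e2 H.
have [be beD Hbe] : exists2 c, c < D & forall e, e \in [set e in U' | e.2 == t] -> k e != c.
  apply: missing_color.
  have -> : #|[set e in U' | e.2 == t]| = #|[set e.1 | e in [set e in U' | e.2 == t]]|.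
    rewrite card_in_imset //; move=> [a1 b1] [a2 b2]; rewrite !inE /=.
    by move=> /andP[_ /eqP->] /andP[_ /eqP->] /= ->.
  apply: leq_trans (degB t); apply: proper_card; apply/properP; split.
  - apply/subsetP => a /imsetP [[a1 b1]]; rewrite !inE /= => /andP [H /eqP e1] ->.
    by rewrite ?inE -e1; move: (rU _ H).
  - exists s; first by rewrite inE.
    apply/imsetP => [[[a1 b1]]]; rewrite !inE /= => /andP [H e1] e2.
    by move: stU'; rewrite -(eqP e1) e2 H.
have Hal' e : e \in U' -> e.1 = s -> k e != al.
  by move=> eU es; apply: Hal; rewrite inE eU es eqxx.
have Hbe' e : e \in U' -> e.2 = t -> k e != be.
  by move=> eU es; apply: Hbe; rewrite inE eU es eqxx.
case: (boolP [forall e in [set e in U' | e.2 == t], k e != al]) => [/forall_inP Ht | ].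
  exists (fun e => if e == (s,t) then al else k e); split.
  - rewrite UE; apply: ext_proper => //.
    by move=> e eU es; apply: Ht; rewrite inE eU /= es eqxx.
  - by move=> e; rewrite UE in_setU1; case: (e == (s,t)) => //= /kD.
rewrite negb_forall_in => /existsP [e0]; rewrite inE negbK => /andP [/andP [e0U /eqP e0t] /eqP ke0].
have albe : al != be by apply/eqP => ab; move: (Hbe' _ e0U e0t); rewrite ke0 ab eqxx.
exists (fun e => if e == (s,t) then al else k2 U' k al be t e); split.
- rewrite UE; apply: ext_proper.
  + exact: k2_proper.
  + by move=> e eU es; exact: (@k2_s U' k al be t s Hal' e eU es).
  + by move=> e eU es; apply: (k2_t0 kpr Hbe' albe).
- move=> e; rewrite UE in_setU1; case: (e == (s,t)) => //= /kD.
  by case: (k2_range U' k al be t e) => [->|[->|->]].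
Qed.

Lemma konig : exists k, proper_on Ed k /\ forall e, e \in Ed -> k e < D.
Proof. exact: konig_sub. Qed.
End Konig.

Section KernelColor.
Variable dom : A * B -> A * B -> bool.
Variable N : nat.
Hypothesis kern : forall W : {set A * B}, W \subset Ed -> exists K : {set A * B}, [/\ K \subset W,
  (forall e f, e \in K -> f \in K -> ~~ adjE e f) &
  (forall e, e \in W -> e \notin K -> exists2 f, f \in K & dom e f)].

Lemma kernel_color (U : {set A*B}) (L : A * B -> {set 'I_N.+1}) : U \subset Ed ->
  (forall e, e \in U -> #|[set f in U | dom e f]| < #|L e|) ->
  exists col : A * B -> 'I_N.+1, (forall e, e \in U -> col e \in L e) /\
    (forall e f, e \in U -> f \in U -> adjE e f -> col e != col f).
Proof.
have [n] := ubnP #|U|; elim: n U L => // n IH U L ltUn sUE HL.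
case: (set_0Vmem U) => [->|[e0 e0U]].
  by exists (fun _ => ord0); split => [e|e f]; rewrite in_set0.
have : 0 < #|L e0| by apply: leq_ltn_trans (HL _ e0U).
case/card_gt0P => al alL.
pose W := [set e in U | al \in L e].
have sWE : W \subset Ed by apply: (subset_trans _ sUE); apply/subsetP => e; rewrite inE => /andP [].
have [K [sKW Kind Kdom]] := kern sWE.
have sKU : K \subset U by apply: (subset_trans sKW); apply/subsetP => e; rewrite inE => /andP [].
have [k0 k0K] : exists k0, k0 \in K.
  have e0W : e0 \in W by rewrite inE e0U alL.
  case: (boolP (e0 \in K)) => [H|H]; first by exists e0.
  by case: (Kdom _ e0W H) => f fK _; exists f.
pose U' := U :\: K.
pose L' e := L e :\ al.
have [col' [col'L col'p]] : exists col' : A * B -> 'I_N.+1, (forall e, e \in U' -> col' e \in L' e) /\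
    (forall e f, e \in U' -> f \in U' -> adjE e f -> col' e != col' f).
  apply: IH.
  - rewrite -ltnS; apply: leq_trans ltUn; rewrite ltnS; apply: proper_card.
    apply/properP; split; first by apply: subsetDl.
    by exists k0; [apply: (subsetP sKU) | rewrite inE k0K].
  - by apply: (subset_trans _ sUE); apply: subsetDl.
  - move=> e; rewrite inE => /andP [eK eU].
    have subU : [set f in U' | dom e f] \subset [set f in U | dom e f].
      by apply/subsetP => f; rewrite !inE => /andP [/andP [_ ->] ->].
    case: (boolP (al \in L e)) => alLe; last first.
      have -> : L' e = L e.
        by apply/setP => i; rewrite !inE; case: eqP => // ->; rewrite (negbTE alLe).
      exact: leq_ltn_trans (subset_leq_card subU) (HL _ eU).
    have eW : e \in W by rewrite inE eU alLe.
    case: (Kdom _ eW eK) => f0 f0K def0.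
    have sub2 : [set f in U' | dom e f] \subset [set f in U | dom e f] :\ f0.
      apply/subsetP => f; rewrite !inE => /andP [/andP [fK fU] df]; rewrite fU df /= ?andbT.
      by apply/eqP => ff0; rewrite ff0 f0K in fK.
    have h1 := subset_leq_card sub2.
    have h2 := cardsD1 f0 [set f in U | dom e f].
    rewrite inE (subsetP sKU _ f0K) def0 /= in h2.
    have h3 := cardsD1 al (L e); rewrite alLe in h3.
    have h4 := HL _ eU.
    rewrite h2 h3 ltn_add2l in h4.
    exact: leq_ltn_trans h1 h4.
exists (fun e => if e \in K then al else col' e); split.
- move=> e eU; case: ifP => eK.
    by have := subsetP sKW _ eK; rewrite inE => /andP [].
  have : e \in U' by rewrite inE eK eU.
  by move/col'L; rewrite inE => /andP [].
- move=> e f eU fU ef; case: ifP => eK; case: ifP => fK.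
  + by move: (Kind _ _ eK fK); rewrite ef.
  + have : f \in U' by rewrite inE fK fU.
    by move/col'L; rewrite !inE eq_sym => /andP [].
  + have : e \in U' by rewrite inE eK eU.
    by move/col'L; rewrite !inE => /andP [].
  + by apply: col'p; rewrite ?inE ?eK ?fK ?eU ?fU.
Qed.
End KernelColor.

Section Stable.
Variable kap : A * B -> nat.
Hypothesis kpr : proper_on Ed kap.
Definition domk (e f : A * B) :=
  adjE e f && (if e.1 == f.1 then kap e < kap f else kap f < kap e).

Variable W : {set A * B}.
Hypothesis sWE : W \subset Ed.

Definition PA (X : {set A*B}) := [set e in W :\: X |
  [forall f in W :\: X, (f.1 == e.1) ==> (kap f <= kap e)]].
Definition RB (Y : {set A*B}) := [set e in Y | [exists f in Y, (f.2 == e.2) && (kap f < kap e)]].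
Definition FX (X : {set A*B}) := X :|: RB (PA X).

Lemma PA_sub (X : {set A*B}) : PA X \subset W :\: X.
Proof. by apply/subsetP => e; rewrite inE => /andP []. Qed.
Lemma RB_sub Y : RB Y \subset Y.
Proof. by apply/subsetP => e; rewrite inE => /andP []. Qed.

Lemma PA_keep (X X' : {set A*B}) e : X \subset X' -> e \in PA X -> e \notin X' -> e \in PA X'.
Proof.
move=> sX; rewrite !inE => /andP [/andP [eX eW] /forall_inP H] eX'.
rewrite eX' eW /=; apply/forall_inP => f; rewrite !inE => /andP [fX' fW].
apply: H; rewrite !inE fW andbT; apply: contra fX'; exact: (subsetP sX).
Qed.

Lemma best_b (Y : {set A*B}) e : e \in Y ->
  exists g, [/\ g \in Y, g.2 = e.2, kap g <= kap e & g \notin RB Y].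
Proof.
move=> eY.
have [g /andP [gY /eqP g2] Hg] :=
  @arg_minnP _ e [pred f | (f \in Y) && (f.2 == e.2)] kap (ltac:(by rewrite /= eY eqxx)).
exists g; split => //; first by apply: Hg; rewrite /= eY eqxx.
rewrite inE gY /=; apply/existsP => [[f /andP [fY /andP [/eqP f2 lt]]]].
have := Hg f; rewrite /= fY f2 g2 eqxx => /(_ isT).
by rewrite leqNgt lt.
Qed.

Lemma best_a (X : {set A*B}) e : e \in W :\: X -> exists2 g, g \in PA X & (g.1 = e.1 /\ kap e <= kap g).
Proof.
move=> eWX.
have [g /andP [gWX /eqP g1] Hg] :=
  @arg_maxnP _ e [pred f | (f \in W :\: X) && (f.1 == e.1)] kap (ltac:(by rewrite /= eWX eqxx)).
exists g; last by split => //; apply: Hg; rewrite /= eWX eqxx.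
rewrite inE gWX /=; apply/forall_inP => f fWX; apply/implyP => /eqP f1.
by apply: Hg; rewrite /= fWX f1 g1 eqxx.
Qed.

Definition Inv (X : {set A*B}) := X \subset W /\
  forall e, e \in X -> exists2 f, f \in PA X & (f.2 = e.2 /\ kap f < kap e).

Lemma Inv0 : Inv set0.
Proof. by split; [exact: sub0set | move=> e; rewrite in_set0]. Qed.

Lemma Inv_FX (X : {set A*B}) : Inv X -> Inv (FX X).
Proof.
move=> [sXW HX]; split.
  apply/subsetP => e; rewrite inE => /orP [/(subsetP sXW)//|].
  by move/(subsetP (RB_sub _)) /(subsetP (PA_sub _)); rewrite inE => /andP [].
move=> e eF.
have [g gP [g2 lt]] : exists2 g, g \in PA X & (g.2 = e.2 /\ kap g < kap e).
  move: eF; rewrite inE => /orP [/HX //|].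
  by rewrite inE => /andP [_ /existsP [f /andP [fP /andP [/eqP f2 lt]]]]; exists f.
have [h [hP h2 hg hR]] := best_b gP.
exists h; last by split; [rewrite h2 g2 | exact: leq_ltn_trans hg lt].
apply: (PA_keep (subsetUl _ _) hP).
rewrite inE negb_or hR andbT.
by have := subsetP (PA_sub X) _ hP; rewrite inE => /andP [].
Qed.

Definition Xn n := iter n FX set0.
Lemma Inv_Xn n : Inv (Xn n).
Proof. by elim: n => [|n IH]; [exact: Inv0 | exact: Inv_FX]. Qed.

Lemma Xn_fix : exists n, FX (Xn n) = Xn n.
Proof.
suff H : forall n, n <= #|Xn n| \/ exists m, FX (Xn m) = Xn m.
  case: (H #|W|.+1) => // H1; exfalso.
  have := subset_leq_card (proj1 (Inv_Xn #|W|.+1)).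
  by rewrite leqNgt (leq_trans _ H1).
elim=> [|n [IH|IH]]; [by left | | by right].
case: (eqVneq (FX (Xn n)) (Xn n)) => [E|E]; first by right; exists n.
left; apply: leq_ltn_trans IH _; apply: proper_card.
rewrite /Xn iterS -/(Xn n) properEneq eq_sym E /=.
exact: subsetUl.
Qed.

Lemma stable_kernel : exists K : {set A*B}, [/\ K \subset W,
  (forall e f, e \in K -> f \in K -> ~~ adjE e f) &
  (forall e, e \in W -> e \notin K -> exists2 f, f \in K & domk e f)].
Proof.
have [n Hn] := Xn_fix; set X := Xn n in Hn.
have [sXW HX] := Inv_Xn n; rewrite -/X in sXW HX.
have RB0 : forall e, e \notin RB (PA X).
  move=> e; apply/negP => eR.
  have eX : e \in X by rewrite -Hn inE eR orbT.
  by have := subsetP (PA_sub X) _ (subsetP (RB_sub _) _ eR); rewrite inE eX.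
have PW e : e \in PA X -> e \in W by move/(subsetP (PA_sub X)); rewrite inE => /andP [].
have kE e : e \in W -> e \in Ed := subsetP sWE e.
exists (PA X); split.
- by apply/subsetP => e /PW.
- move=> e f eP fP; apply/negP => ef.
  have kef := kpr (kE _ (PW _ eP)) (kE _ (PW _ fP)) ef.
  move: (ef); rewrite /adjE => /andP [_ /orP [/eqP e1|/eqP e2]].
  + move: (eP) (fP); rewrite !inE => /andP [eWX /forall_inP He] /andP [fWX /forall_inP Hf].
    have h1 := He f (ltac:(by rewrite inE)); rewrite e1 eqxx /= in h1.
    have h2 := Hf e (ltac:(by rewrite inE)); rewrite e1 eqxx /= in h2.
    by move: kef; rewrite eqn_leq h1 h2.
  + case: (ltngtP (kap e) (kap f)) => [lt|lt|eq]; last by rewrite eq eqxx in kef.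
    * move: (RB0 f); rewrite inE fP /=; case/negP; apply/existsP; exists e.
      by rewrite eP e2 eqxx.
    * move: (RB0 e); rewrite inE eP /=; case/negP; apply/existsP; exists f.
      by rewrite fP e2 eqxx.
- move=> e eW eK.
  case: (boolP (e \in X)) => eX.
  + have [f fP [f2 lt]] := HX _ eX; exists f => //; rewrite /domk /adjE.
    have fe : e != f by apply/eqP => ef; rewrite ef ltnn in lt.
    rewrite fe f2 eqxx orbT /=.
    case: eqP => // e1; exfalso; move/eqP: fe; apply.
    by rewrite [e]surjective_pairing [f]surjective_pairing e1 f2.
  + have eWX : e \in W :\: X by rewrite inE eX eW.
    have : ~~ [forall f in W :\: X, (f.1 == e.1) ==> (kap f <= kap e)].
      by move: eK; rewrite inE eWX.
    rewrite negb_forall_in => /existsP [f /andP [fWX]]; rewrite negb_imply -ltnNge.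
    move=> /andP [/eqP f1 lt].
    have [g gP [g1 le]] := best_a fWX.
    have lt' : kap e < kap g := leq_trans lt le.
    exists g => //; rewrite /domk /adjE.
    have ge : e != g by apply/eqP => eg; rewrite eg ltnn in lt'.
    by rewrite ge g1 f1 eqxx.
Qed.
End Stable.

Theorem galvin (D N : nat)
  (degA : forall a, #|[set b | r a b]| <= D)
  (degB : forall b, #|[set a | r a b]| <= D)
  (L : A * B -> {set 'I_N.+1}) :
  (forall e, e \in Ed -> D <= #|L e|) ->
  exists col : A * B -> 'I_N.+1, (forall e, e \in Ed -> col e \in L e) /\
    (forall e f, e \in Ed -> f \in Ed -> adjE e f -> col e != col f).
Proof.
move=> HL.
have [kap [kpr kD]] := konig degA degB.
apply: (@kernel_color (domk kap) N _ Ed L (subxx _)).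
  by move=> W sWE; exact: (stable_kernel kpr sWE).
move=> e eE; apply: leq_trans (HL _ eE).
have De := kD _ eE.
pose S := [set f in Ed | domk kap e f].
pose m (f : A * B) := (inord (kap f) : 'I_D.+1).
have mK f : f \in Ed -> val (m f) = kap f by move/kD => H; rewrite /m; apply: inordK; apply: ltnW.
have minj : {in S &, injective m}.
  move=> f g; rewrite !inE => /andP [fE df] /andP [gE dg] mfg.
  have {}fE : f \in Ed by move: fE; rewrite ?inE.
  have {}gE : g \in Ed by move: gE; rewrite ?inE.
  have kfg : kap f = kap g by rewrite -(mK f fE) -(mK g gE) mfg.
  apply/eqP; apply: contraT => nfg.
  move: df dg; rewrite /domk /adjE => /andP [/andP [_ ef] cf] /andP [/andP [_ eg] cg].
  case: eqP cf => [f1|nf1] cf; case: eqP cg => [g1|ng1] cg.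
  - have : adjE f g by rewrite /adjE nfg -f1 -g1 eqxx.
    by move/(kpr _ _ fE gE); rewrite kfg eqxx.
  - by move: (ltn_trans cg cf); rewrite kfg ltnn.
  - by move: (ltn_trans cf cg); rewrite kfg ltnn.
  - move: ef eg; rewrite (negbTE (introN eqP nf1)) (negbTE (introN eqP ng1)) /= => /eqP f2 /eqP g2.
    have : adjE f g by rewrite /adjE nfg -f2 -g2 eqxx orbT.
    by move/(kpr _ _ fE gE); rewrite kfg eqxx.
have sub : [set m f | f in S] \subset ([set: 'I_D.+1] :\ ord_max) :\ m e.
  apply/subsetP => i /imsetP [f]; rewrite inE => /andP [fE df] ->.
  have {}fE : f \in Ed by move: fE; rewrite ?inE.
  rewrite !inE andbT; apply/andP; split.
    apply/eqP => /(congr1 val); rewrite !mK // => kfe.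
    move: df; rewrite /domk => /andP [H _].
    have : adjE f e by move: H; rewrite /adjE eq_sym (eq_sym e.1) (eq_sym e.2).
    by move/(kpr _ _ fE eE); rewrite kfe eqxx.
  apply/eqP => /(congr1 val); rewrite mK //= => fD.
  by move: (kD _ fE); rewrite fD ltnn.
have h := subset_leq_card sub; rewrite card_in_imset // in h.
have me : m e \in [set: 'I_D.+1] :\ ord_max.
  rewrite !inE andbT; apply/eqP => /(congr1 val); rewrite mK //= => H.
  by rewrite H ltnn in De.
have c2 := cardsD1 (m e) ([set: 'I_D.+1] :\ ord_max); rewrite me in c2.
have c1 := cardsD1 ord_max [set: 'I_D.+1]; rewrite in_setT cardsT card_ord in c1.
rewrite /= !add1n in c1 c2; rewrite c2 in c1; case: c1 => ->.
exact: leq_ltn_trans h (ltnSn _).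
Qed.
End Bip.


Lemma w_refl (V : finType) (e : rel V) k x : within e k x x.
Proof. by elim: k => [|k IH] /=; rewrite ?eqxx ?IH. Qed.

Lemma w_mono (V : finType) (e : rel V) k x y : within e k x y -> within e k.+1 x y.
Proof. by move=> H /=; rewrite H. Qed.

Lemma w_2 (V : finType) (e : rel V) x z y : e x z -> within e 1 z y -> within e 2 x y.
Proof.
move=> H1 H2; change (within e 1 x y || [exists z, e x z && within e 1 z y]).
by apply/orP; right; apply/existsP; exists z; rewrite H1 H2.
Qed.

Lemma w_1 (V : finType) (e : rel V) x y : e x y -> within e 1 x y.
Proof.
move=> H; change (within e 0 x y || [exists z, e x z && (z == y)]).
by apply/orP; right; apply/existsP; exists y; rewrite H eqxx.
Qed.

Lemma set2_eq (V : finType) (u v u' v' : V) : u != v -> [set u; v] = [set u'; v'] ->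
  (u' = u /\ v' = v) \/ (u' = v /\ v' = u).
Proof.
move=> uv E.
have : u' \in [set u; v] by rewrite E !inE eqxx.
have : v' \in [set u; v] by rewrite E !inE eqxx orbT.
have : u \in [set u'; v'] by rewrite -E !inE eqxx.
have : v \in [set u'; v'] by rewrite -E !inE eqxx orbT.
rewrite !inE => /orP [/eqP->|/eqP->] /orP [/eqP->|/eqP->] /orP [/eqP e1|/eqP e1] /orP [/eqP e2|/eqP e2];
  subst; rewrite ?eqxx in uv; by [left|right|].
Qed.

Section Main.
Variables (T : finType) (g : rel T).
Hypothesis gsym : symmetric g.
Hypothesis girr : irreflexive g.
Variable p : T -> bool.
Hypothesis Hp : forall x y, g x y -> p x != p y.
Variables (E0 : {set {set (T * bool)}}) (c : {set (T * bool)} -> nat).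
Notation pr := (prodK2 g).
Notation Dl := (max_degree g).
Hypothesis HE0 : E0 \subset edges pr.
Hypothesis Hc : forall a, a \in E0 -> c a < Dl.+1.
Hypothesis Hdist : forall a b, a \in E0 -> b \in E0 -> a != b -> edge_dist_ge pr 3 a b.

Lemma pr_sym : symmetric pr.
Proof.
move=> u v; rewrite /prodK2 (eq_sym u.1) (eq_sym u.2) gsym.
by rewrite (eq_sym v.2 u.2).
Qed.

Lemma pr_irr u : pr u u = false.
Proof. by rewrite /prodK2 !eqxx /=; apply: girr. Qed.

Lemma close a b s t : a \in E0 -> b \in E0 -> s \in a -> t \in b -> within pr 2 s t -> a = b.
Proof.
move=> aE bE sa tb w; apply/eqP; apply: contraT => ab.
by case/negP: (Hdist aE bE ab sa tb).
Qed.

Lemma w_near s t : (s.1 == t.1) || g s.1 t.1 -> within pr 2 s t.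
Proof.
have same u v : u.1 = v.1 -> within pr 1 u v.
  move=> e1; case: (eqVneq u v) => [->|uv]; first exact: w_refl.
  apply: w_1; rewrite /prodK2 e1 eqxx /=; apply/orP; left.
  by apply: contra uv => /eqP e2; rewrite [u]surjective_pairing [v]surjective_pairing e1 e2.
case/orP => [/eqP e1|gst]; first exact/w_mono/same.
apply: (@w_2 _ _ s (t.1, s.2)); last exact: same.
by rewrite /prodK2 /= eqxx gst orbT.
Qed.

Definition touch x (e : {set T * bool}) := ((x,false) \in e) || ((x,true) \in e).

Lemma touch_close x y a b : a \in E0 -> b \in E0 -> (x == y) || g x y ->
  touch x a -> touch y b -> a = b.
Proof.
move=> aE bE xy ta tb.
have [s [sa s1]] : exists s, s \in a /\ s.1 = x by case/orP: ta => H; [exists (x,false)| exists (x,true)].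
have [t [tb' t1]] : exists t, t \in b /\ t.1 = y by case/orP: tb => H; [exists (y,false)| exists (y,true)].
by apply: (close aE bE sa tb'); apply: w_near; rewrite s1 t1.
Qed.

Lemma xx_or x : (x == x) || g x x.
Proof. by rewrite eqxx. Qed.

Definition rung x : {set T * bool} := [set (x,false); (x,true)].
Definition cp (i : bool) x y : {set T * bool} := [set (x,i); (y,i)].
Definition isM x y := (cp false x y \in E0) || (cp true x y \in E0).
Definition mcol x y := if cp false x y \in E0 then c (cp false x y) else c (cp true x y).
Definition forb x (i : nat) := [exists e in E0, touch x e && (c e == i)].

Lemma cpC i x y : cp i x y = cp i y x.
Proof. by rewrite /cp setUC. Qed.

Lemma isMC x y : isM x y = isM y x.
Proof. by rewrite /isM !(cpC _ x y). Qed.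

Lemma mcolC x y : mcol x y = mcol y x.
Proof. by rewrite /mcol !(cpC _ x y). Qed.

Lemma touch_cp i x y : touch x (cp i x y).
Proof. by rewrite /touch /cp; case: i; rewrite !inE eqxx ?orbT. Qed.

Lemma touch_rung x : touch x (rung x).
Proof. by rewrite /touch /rung !inE eqxx. Qed.

Definition rel2 (a b : T) := g a b && ~~ p a && ~~ isM a b.
Definition Lst (e : T * T) : {set 'I_Dl.+1} := [set i : 'I_Dl.+1 | ~~ forb e.1 i && ~~ forb e.2 i].

Lemma deg_le x : #|[set y | g x y]| <= Dl.
Proof. by have := @leq_bigmax _ (fun z => degree g z) x. Qed.

Lemma degA a : #|[set b | rel2 a b]| <= Dl.
Proof.
apply: leq_trans (deg_le a); apply: subset_leq_card; apply/subsetP => b.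
by rewrite !inE => /andP [/andP [-> _] _].
Qed.

Lemma degB b : #|[set a | rel2 a b]| <= Dl.
Proof.
apply: leq_trans (deg_le b); apply: subset_leq_card; apply/subsetP => a.
by rewrite !inE gsym => /andP [/andP [-> _] _].
Qed.

Lemma HL e : e \in Ed rel2 -> Dl <= #|Lst e|.
Proof.
case: e => x y; rewrite inE /= /rel2 => /andP [/andP [gxy _] _].
have C1 : #|~: Lst (x,y)| <= 1.
  rewrite leqNgt; apply/negP => /card_gt1P [i [j [iC jC ij]]].
  move: iC jC; rewrite !inE /= !negb_and !negbK.
  have H z k : forb z k -> exists2 a, a \in E0 & touch z a /\ c a = k.
    by case/exists_inP => a aE /andP [ta /eqP ca]; exists a.
  have near z w : (z == x) || (z == y) -> (w == x) || (w == y) -> (z == w) || g z w.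
    by case/orP => /eqP ->; case/orP => /eqP ->; rewrite ?eqxx // ?gxy ?orbT // gsym gxy orbT.
  move=> Hi Hj.
  have [zi [ai aiE [tai cai]] zix] : exists2 z, (exists2 a, a \in E0 & touch z a /\ c a = i) & ((z == x) || (z == y)).
    by case/orP: Hi => /H h; [exists x | exists y]; rewrite ?eqxx ?orbT.
  have [zj [aj ajE [taj caj]] zjx] : exists2 z, (exists2 a, a \in E0 & touch z a /\ c a = j) & ((z == x) || (z == y)).
    by case/orP: Hj => /H h; [exists x | exists y]; rewrite ?eqxx ?orbT.
  have := touch_close aiE ajE (near _ _ zix zjx) tai taj => aij.
  have ij2 : i = j by apply: val_inj; rewrite /= -cai -caj aij.
  by rewrite ij2 eqxx in ij.
have := cardsC (Lst (x,y)); rewrite card_ord.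
move: C1; set a := #|Lst (x,y)|; set b := #|~: _| => C1 H.
have : a + b <= a + 1 by rewrite leq_add2l.
by rewrite H addn1 ltnS.
Qed.


Variable col : T * T -> 'I_Dl.+1.
Hypothesis colL : forall e, e \in Ed rel2 -> col e \in Lst e.
Hypothesis colP : forall e f, e \in Ed rel2 -> f \in Ed rel2 -> adjE e f -> col e != col f.

Definition psi x y : nat :=
  if isM x y then mcol x y else if ~~ p x then (col (x,y) : nat) else (col (y,x) : nat).

Lemma Ed_rel x y : g x y -> ~~ isM x y -> ~~ p x -> (x,y) \in Ed rel2.
Proof. by move=> H1 H2 H3; rewrite inE /rel2 /= H1 H2 H3. Qed.

Lemma p_opp x y : g x y -> p x = ~~ p y.
Proof. by move/Hp; case: (p x); case: (p y). Qed.

Lemma psi_sym x y : g x y -> psi x y = psi y x.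
Proof.
move=> gxy; rewrite /psi isMC mcolC; case: isM => //.
by rewrite (p_opp gxy); case: (p y).
Qed.

Lemma psi_nf x y : g x y -> ~~ isM x y -> ~~ forb x (psi x y) && ~~ forb y (psi x y).
Proof.
move=> gxy nM; rewrite /psi (negbTE nM).
case px: (p x) => /=.
  have py : ~~ p y by move: px; rewrite (p_opp gxy).
  have yx : (y,x) \in Ed rel2 by apply: Ed_rel; [rewrite gsym | rewrite isMC | ].
  by have := colL yx; rewrite inE /= andbC.
have := colL (Ed_rel gxy nM (ltac:(by rewrite px))).
by rewrite inE.
Qed.

Lemma isM_E x y : isM x y -> exists2 i, cp i x y \in E0 & mcol x y = c (cp i x y).
Proof.
rewrite /isM /mcol; case: ifP => [H _|_ /= H]; first by exists false.
by exists true.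
Qed.

Lemma forb_M x y : isM x y -> forb x (psi x y).
Proof.
move=> M; rewrite /psi M; have [i iE ->] := isM_E M.
by apply/exists_inP; exists (cp i x y) => //; rewrite touch_cp eqxx.
Qed.

Lemma psi_lt x y : psi x y < Dl.+1.
Proof.
rewrite /psi; case M: (isM x y); first by have [i iE ->] := isM_E M; apply: Hc.
by case: (~~ p x).
Qed.

Lemma cp_neq i j x y z : g x y -> y != z -> cp i x y != cp j x z.
Proof.
move=> gxy yz; apply/eqP => E.
have : (y,i) \in cp j x z by rewrite -E !inE eqxx orbT.
rewrite !inE => /orP [/eqP [yx _]|/eqP [yz' _]].
  by rewrite yx girr in gxy.
by rewrite yz' eqxx in yz.
Qed.

Lemma psi_proper x y z : g x y -> g x z -> y != z -> psi x y != psi x z.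
Proof.
move=> gxy gxz yz.
case My: (isM x y); case Mz: (isM x z).
- have [i iE _] := isM_E My; have [j jE _] := isM_E Mz.
  have := touch_close iE jE (xx_or x) (touch_cp i x y) (touch_cp j x z).
  by move/eqP; rewrite (negbTE (cp_neq i j gxy yz)).
- have := forb_M My; have := psi_nf gxz (negbT Mz) => /andP [H _].
  by apply: contraTneq => ->.
- have := forb_M Mz; have := psi_nf gxy (negbT My) => /andP [H _].
  by apply: contraTneq => <-.
- rewrite /psi My Mz.
  case px: (p x) => /=.
    have py : ~~ p y by move: px; rewrite (p_opp gxy).
    have pz : ~~ p z by move: px; rewrite (p_opp gxz).
    have yx : (y,x) \in Ed rel2 by apply: Ed_rel; [rewrite gsym | rewrite isMC My | ].
    have zx : (z,x) \in Ed rel2 by apply: Ed_rel; [rewrite gsym | rewrite isMC Mz | ].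
    have := colP yx zx.
    rewrite /adjE /= eqxx orbT andbT => H.
    have /H : (y, x) != (z, x) by apply: contra yz => /eqP [->].
    by apply: contra => /eqP E; apply/eqP/val_inj.
  have := colP (Ed_rel gxy (negbT My) (ltac:(by rewrite px)))
               (Ed_rel gxz (negbT Mz) (ltac:(by rewrite px))).
  rewrite /adjE /= eqxx andbT => H.
  have /H : (x, y) != (x, z) by apply: contra yz => /eqP [->].
  by apply: contra => /eqP E; apply/eqP/val_inj.
Qed.

Definition rho x : nat :=
  if rung x \in E0 then c (rung x)
  else (odflt ord0 [pick i : 'I_Dl.+1 | [forall y, g x y ==> (psi x y != i)]] : nat).

Lemma rho_lt x : rho x < Dl.+1.
Proof. by rewrite /rho; case: ifP => [/Hc|]. Qed.

Lemma rung_neq_cp i x y : g x y -> rung x != cp i x y.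
Proof.
move=> gxy; apply/eqP => E.
have : (x, ~~ i) \in cp i x y by rewrite -E !inE; case: (~~ i); rewrite eqxx ?orbT.
rewrite !inE => /orP [/eqP []|/eqP [xy _]]; first by case: (i).
by rewrite xy girr in gxy.
Qed.

Lemma rho_ok x y : g x y -> rho x != psi x y.
Proof.
move=> gxy; rewrite /rho; case: ifP => rE.
  case M: (isM x y).
    have [i iE _] := isM_E M.
    have := touch_close rE iE (xx_or x) (touch_rung x) (touch_cp i x y).
    by move/eqP; rewrite (negbTE (rung_neq_cp i gxy)).
  have := psi_nf gxy (negbT M) => /andP [H _].
  apply: contraNneq H => <-; apply/exists_inP; exists (rung x) => //.
  by rewrite touch_rung eqxx.
have [i Hi] : exists i : 'I_Dl.+1, [forall y, g x y ==> (psi x y != i)].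
  pose Img := [set (inord (psi x y) : 'I_Dl.+1) | y in [set y | g x y]].
  have : ~~ ([set: 'I_Dl.+1] \subset Img).
    apply/negP => /subset_leq_card; rewrite cardsT card_ord => H.
    have := leq_trans H (leq_trans (leq_imset_card _ _) (deg_le x)).
    by rewrite ltnn.
  case/subsetPn => i _ Hi; exists i; apply/forallP => z; apply/implyP => gxz.
  apply/eqP => E; move/negP: Hi; apply; apply/imsetP; exists z; first by rewrite inE.
  by apply: val_inj; rewrite /= inordK E.
case: pickP => [j /forallP /(_ y) /implyP /(_ gxy) /=|H]; first by rewrite eq_sym.
by move: (H i) => /=; rewrite Hi.
Qed.

Definition col2 (u v : T * bool) : nat := if u.1 == v.1 then rho u.1 else psi u.1 v.1.
Definition fcol (a : {set T * bool}) : nat :=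
  if [pick uv : (T * bool) * (T * bool) | (a == [set uv.1; uv.2]) && pr uv.1 uv.2] is Some uv
  then col2 uv.1 uv.2 else 0.

Lemma pr_cases u v : pr u v -> (u.1 = v.1 /\ u.2 != v.2) \/ (u.2 = v.2 /\ g u.1 v.1).
Proof. by rewrite /prodK2 => /orP [/andP [/eqP -> ->]|/andP [/eqP -> ->]]; [left|right]. Qed.

Lemma col2_sym u v : pr u v -> col2 u v = col2 v u.
Proof.
move=> puv; rewrite /col2 eq_sym; case: eqP => [e|ne].
  by rewrite e.
by case: (pr_cases puv) => [[e _]|[_ gu]]; [case: ne | exact: psi_sym].
Qed.

Lemma fcolE u v : pr u v -> fcol [set u; v] = col2 u v.
Proof.
move=> puv; have uv : u != v by apply: contraTneq puv => ->; rewrite pr_irr.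
rewrite /fcol; case: pickP => [[u' v'] /andP [/eqP E pr'] | H].
  rewrite /= in E pr' *.
  by case: (set2_eq uv E) => [[-> ->]|[-> ->]] //; rewrite col2_sym // pr_sym.
by move: (H (u,v)); rewrite /= eqxx puv.
Qed.

Lemma in_edges u v : pr u v -> [set u; v] \in edges pr.
Proof. by move=> puv; apply/imset2P; exists u v => //; rewrite inE. Qed.

Lemma edgesP a : a \in edges pr -> exists u v, a = [set u; v] /\ pr u v.
Proof. by case/imset2P => u v _; rewrite inE => puv ->; exists u, v. Qed.

Lemma norm_edge a w : a \in edges pr -> w \in a -> exists u, a = [set w; u] /\ pr w u.
Proof.
case/edgesP => u [v [-> puv]]; rewrite !inE => /orP [/eqP ->|/eqP ->].
  by exists v.
by exists u; rewrite setUC pr_sym.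
Qed.

Lemma fcol_lt a : a \in edges pr -> fcol a < Dl.+1.
Proof.
case/edgesP => u [v [-> puv]]; rewrite fcolE // /col2; case: ifP => _.
  exact: rho_lt.
exact: psi_lt.
Qed.

Lemma fcol_proper a b : a \in edges pr -> b \in edges pr -> a != b ->
  (exists v, (v \in a) && (v \in b)) -> fcol a != fcol b.
Proof.
move=> aE bE ab [w /andP [wa wb]].
have [u [Ea pu]] := norm_edge aE wa; have [v [Eb pv]] := norm_edge bE wb.
have uv : u != v by apply: contra ab => /eqP uv; rewrite Ea Eb uv.
rewrite Ea Eb !fcolE // /col2.
case: (pr_cases pu) => [[e1 n2]|[e2 gu]]; case: (pr_cases pv) => [[f1 m2]|[f2 gv]].
- exfalso; move/negP: uv; apply; apply/eqP.
  rewrite [u]surjective_pairing [v]surjective_pairing -e1 -f1.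
  by move: n2 m2; case: (w.2); case: (u.2); case: (v.2).
- rewrite e1 eqxx; have -> : (u.1 == v.1) = false.
    by apply/negbTE; rewrite -e1; apply: contraTneq gv => ->; rewrite girr.
  by rewrite -e1; apply: rho_ok.
- have -> : (w.1 == u.1) = false.
    by apply/negbTE; apply: contraTneq gu => ->; rewrite girr.
  by rewrite f1 eqxx eq_sym -f1; apply: rho_ok.
- have -> : (w.1 == u.1) = false by apply/negbTE; apply: contraTneq gu => ->; rewrite girr.
  have -> : (w.1 == v.1) = false by apply/negbTE; apply: contraTneq gv => ->; rewrite girr.
  apply: psi_proper => //; apply: contra uv => /eqP u1.
  by rewrite [u]surjective_pairing [v]surjective_pairing u1 -e2 -f2.
Qed.

Lemma fcol_pre a : a \in E0 -> fcol a = c a.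
Proof.
move=> aE0; have := subsetP HE0 _ aE0; case/edgesP => u [v [Ea puv]].
rewrite {1}Ea fcolE // /col2; case: (pr_cases puv) => [[e1 n2]|[e2 gu]].
  have Er : a = rung u.1.
    rewrite Ea /rung [u]surjective_pairing [v]surjective_pairing -e1 /=.
    by move: n2; case: (u.2); case: (v.2) => //= _; rewrite setUC.
  by rewrite e1 eqxx /rho -e1 -Er aE0.
have -> : (u.1 == v.1) = false by apply/negbTE; apply: contraTneq gu => ->; rewrite girr.
have Ec : a = cp u.2 u.1 v.1 by rewrite Ea /cp {2}e2 -!surjective_pairing.
have M : isM u.1 v.1 by rewrite /isM; case: (u.2) Ec => <-; rewrite aE0 ?orbT.
rewrite /psi M /mcol; case: ifP => F.
  case: (boolP (u.2)) => u2; last by rewrite Ec (negbTE u2).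
  have aT : a = cp true u.1 v.1 by rewrite Ec u2.
  have E := touch_close F aE0 (xx_or u.1) (touch_cp false u.1 v.1) (ltac:(rewrite aT; exact: touch_cp)).
  exfalso.
  have : (u.1, true) \in cp false u.1 v.1 by rewrite E aT !inE eqxx.
  by rewrite !inE !xpair_eqE !andbF.
case: (boolP (u.2)) => u2; first by rewrite Ec u2.
by rewrite Ec (negbTE u2) F in aE0.
Qed.

End Main.


Lemma chi_lb (T : finType) (g : rel T) (gsym : symmetric g) (girr : irreflexive g) chi f0 (x0 : T) :
  proper_edge_coloring (prodK2 g) chi f0 -> (max_degree g).+1 <= chi.
Proof.
move=> [f0lt f0p].
have [x Hx] := @eq_bigmax _ (fun z => degree g z) (ltac:(apply/card_gt0P; by exists x0)).
rewrite /max_degree Hx /degree.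
pose R := [set (x,false); (x,true)].
have RE : R \in edges (prodK2 g) by apply: in_edges; rewrite /prodK2 /= eqxx.
pose C y := [set (x,false); (y,false)].
have CE y : g x y -> C y \in edges (prodK2 g).
  by move=> gy; apply: in_edges; rewrite /prodK2 /= andbF /= gy.
have xin y : (x,false) \in C y by rewrite !inE eqxx.
have xinR : (x,false) \in R by rewrite !inE eqxx.
case: chi f0lt f0p => [|n] f0lt f0p; first by have := f0lt _ RE.
pose Img := [set (inord (f0 (C y)) : 'I_n.+1) | y in [set y | g x y]].
have inj : {in [set y | g x y] &, injective (fun y => (inord (f0 (C y)) : 'I_n.+1))}.
  move=> y z; rewrite !inE => gy gz /(congr1 val) /=.
  rewrite !inordK ?(f0lt _ (CE _ gy)) ?(f0lt _ (CE _ gz)) // => E.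
  apply/eqP; apply: contraT => yz.
  have Cyz : C y != C z.
    apply/eqP => Eq; have : (y,false) \in C z by rewrite -Eq !inE eqxx orbT.
    rewrite !inE !xpair_eqE !andbT => /orP [/eqP yx|/eqP yz']; last by rewrite yz' eqxx in yz.
    by rewrite yx girr in gy.
  have ex : exists v, (v \in C y) && (v \in C z) by exists (x,false); rewrite !xin.
  have := f0p _ _ (CE _ gy) (CE _ gz) Cyz ex.
  by rewrite E eqxx.
have sub : Img \subset [set: 'I_n.+1] :\ inord (f0 R).
  apply/subsetP => i /imsetP [y]; rewrite inE => gy ->; rewrite !inE andbT.
  apply/negP => /eqP /(congr1 val) /=.
  rewrite !inordK ?(f0lt _ (CE _ gy)) ?(f0lt _ RE) // => E.
  have CR : C y != R.
    apply/eqP => Eq; have : (x,true) \in C y by rewrite Eq !inE eqxx orbT.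
    by rewrite !inE !xpair_eqE !andbF.
  have ex : exists v, (v \in C y) && (v \in R) by exists (x,false); rewrite xin xinR.
  have := f0p _ _ (CE _ gy) RE CR ex.
  by rewrite E eqxx.
have := subset_leq_card sub; rewrite card_in_imset //.
have c1 := cardsD1 (inord (f0 R) : 'I_n.+1) [set: 'I_n.+1].
rewrite in_setT cardsT card_ord /= add1n in c1; case: c1 => <-.
by [].
Qed.

Unset Implicit Arguments.

Theorem theorem3 (T : finType) (g : rel T)
  (Hg : simple_graph g) (Hbip : bipartite g)
  (E0 : {set {set (T * bool)}}) (c : {set (T * bool)} -> nat)
  (HE0 : E0 \subset edges (prodK2 g))
  (Hc : forall a, a \in E0 -> c a < (max_degree g).+1)
  (Hdist : forall a b, a \in E0 -> b \in E0 -> a != b ->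
             edge_dist_ge (prodK2 g) 3 a b) :
  forall chi, chromatic_index (prodK2 g) chi ->
  exists f : {set (T * bool)} -> nat,
    proper_edge_coloring (prodK2 g) chi f /\
    (forall a, a \in E0 -> f a = c a).
Proof.
move=> chi [[f0 Hf0] _].
case: Hg => gsym girr; case: Hbip => p Hp.
have [col [colL colP]] := galvin (@degA T g p E0) (@degB T g gsym p E0) (@HL T g gsym p E0 c Hdist).
exists (fcol p E0 c col); split; last first.
  by move=> a aE; apply: fcol_pre.
split.
- move=> a aE; have [u [v [_ _]]] := edgesP aE.
  exact: leq_trans (fcol_lt gsym girr Hp Hc col aE) (chi_lb gsym girr u.1 Hf0).
- move=> a b aE bE ab ex.
  exact: (fcol_proper gsym girr Hp Hdist colL colP aE bE ab ex).
Qed.
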